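(* For integers $1\le k\le n$, let $h_{k|n}(p)=\sum_{i=k}^{n}\binom{n}{i}p^i(1-p)^{n-i}$, $p\in[0,1]$, be the reliability function of a $k$-out-of-$n$ system with i.i.d. components each of reliability $p$, and let $R_{k|n}(p)=(1-p)\,h_{k|n}'(p)/(1-h_{k|n}(p))$ for $p\in(0,1)$. Then: (ii) for integers $1\le k\le n$ and $1\le l\le m$ with $l\le k$ and $n-k\le m-l$, the ratio $R_{k|n}(p)/R_{l|m}(p)$ is increasing in $p\in(0,1)$; (iii) for $1\le k\le n$, the function $p\,R_{k|n}'(p)/R_{k|n}(p)$ is decreasing in $p\in(0,1)$.
   Context: ''Increasing'' means non-decreasing and ''decreasing'' means non-increasing. A $k$-out-of-$n$ system functions as long as at least $k$ of its $n$ components function. (Part (i) of this lemma in the paper, that $R_{k|n}$ is increasing, is a cited result and is not included.) *)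

(* Defs.v *)
From Stdlib Require Import Reals.
From Coquelicot Require Import Coquelicot.
Open Scope R_scope.

Definition h_kn (k n : nat) (p : R) : R :=
  sum_n_m (fun i => Binomial.C n i * p ^ i * (1 - p) ^ (n - i)) k n.

Definition R_kn (k n : nat) (p : R) : R :=
  (1 - p) * Derive (h_kn k n) p / (1 - h_kn k n p).

(* "increasing" = non-decreasing, "decreasing" = non-increasing, on (0,1) *)
Definition incr_on01 (f : R -> R) : Prop :=
  forall p q, 0 < p -> p <= q -> q < 1 -> f p <= f q.
Definition decr_on01 (f : R -> R) : Prop :=
  forall p q, 0 < p -> p <= q -> q < 1 -> f q <= f p.

(* Main.v *)
Require Import Defs.
From Stdlib Require Import Reals Lra Lia Factorial.
From Coquelicot Require Import Coquelicot.
Open Scope R_scope.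


Fixpoint sm (f : nat -> R) (N : nat) : R :=
  match N with O => 0 | S N => sm f N + f N end.

Definition ps (a : nat -> R) (K : nat) (x : R) := sm (fun i => a i * x ^ i) K.

Lemma sm_ext_lt f g N : (forall i, (i < N)%nat -> f i = g i) -> sm f N = sm g N.
Proof.
  induction N; intros H; simpl; auto.
  rewrite IHN by (intros; apply H; lia). rewrite (H N) by lia. auto.
Qed.

Lemma sm_scal c f N : sm (fun i => c * f i) N = c * sm f N.
Proof. induction N; simpl; [ring|rewrite IHN; ring]. Qed.

Lemma sm_nonneg f N : (forall i, (i < N)%nat -> 0 <= f i) -> 0 <= sm f N.
Proof.
  induction N; intros H; simpl; [lra|].
  assert (0 <= sm f N) by (apply IHN; intros; apply H; lia).
  assert (0 <= f N) by (apply H; lia). lra.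
Qed.

Lemma sm_pos f N : (0 < N)%nat -> (forall i, (i < N)%nat -> 0 < f i) -> 0 < sm f N.
Proof.
  destruct N; intros HN H; [lia|]. simpl.
  assert (0 <= sm f N) by (apply sm_nonneg; intros; left; apply H; lia).
  assert (0 < f N) by (apply H; lia). lra.
Qed.

Lemma sm_shift f N : sm f (S N) = f 0%nat + sm (fun j => f (S j)) N.
Proof. induction N; simpl in *; [ring|]. rewrite IHN. ring. Qed.

Lemma sm_rev f N : sm (fun j => f (N - 1 - j)%nat) N = sm f N.
Proof.
  revert f; induction N; intros f; [reflexivity|].
  change (sm (fun j => f (S N - 1 - j)%nat) (S N)) with
    (sm (fun j => f (S N - 1 - j)%nat) N + f (S N - 1 - N)%nat).
  replace (S N - 1 - N)%nat with 0%nat by lia.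
  rewrite (sm_ext_lt _ (fun j => (fun i => f (S i)) (N - 1 - j)%nat)).
  2:{ intros i Hi. simpl. f_equal. lia. }
  rewrite (IHN (fun i => f (S i))). rewrite sm_shift. ring.
Qed.

Lemma sm_sum_n_m f N : sum_n_m f 0 N = sm f (S N).
Proof.
  induction N.
  - rewrite sum_n_n. simpl. rewrite Rplus_0_l. reflexivity.
  - change (sum_n f (S N) = sm f (S (S N))). rewrite sum_Sn.
    change (sum_n f N) with (sum_n_m f 0 N). rewrite IHN. reflexivity.
Qed.

Lemma pair_cond (a b : nat -> R) K :
  (forall j, (j < K)%nat -> 0 < b j) ->
  (forall j, (S j < K)%nat -> a (S j) * b j <= a j * b (S j)) ->
  forall i j, (i < j)%nat -> (j < K)%nat -> a j * b i <= a i * b j.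
Proof.
  intros Hb Hc i j Hij. induction Hij; intros HK.
  - apply Hc; auto.
  - assert (H1 := IHHij ltac:(lia)).
    assert (H2 := Hc m ltac:(lia)).
    assert (Hbm : 0 < b m) by (apply Hb; lia).
    assert (Hbi : 0 < b i) by (apply Hb; lia).
    assert (Hbs : 0 < b (S m)) by (apply Hb; lia).
    apply (Rmult_le_reg_r (b m)); auto.
    apply Rle_trans with (a m * b (S m) * b i).
    + replace (a (S m) * b i * b m) with ((a (S m) * b m) * b i) by ring.
      apply Rmult_le_compat_r; lra.
    + replace (a m * b (S m) * b i) with ((a m * b i) * b (S m)) by ring.
      replace (a i * b (S m) * b m) with ((a i * b m) * b (S m)) by ring.
      apply Rmult_le_compat_r; lra.
Qed.

Lemma pow_cross s t i K : 0 <= s <= t -> (i <= K)%nat -> t ^ i * s ^ K <= s ^ i * t ^ K.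
Proof.
  intros Hst HiK.
  replace K with (i + (K - i))%nat by lia. rewrite !pow_add.
  assert (s ^ (K - i) <= t ^ (K - i)) by (apply pow_incr; lra).
  assert (0 <= s ^ i) by (apply pow_le; lra).
  assert (0 <= t ^ i) by (apply pow_le; lra).
  replace (t ^ i * (s ^ i * s ^ (K - i))) with ((t ^ i * s ^ i) * s ^ (K - i)) by ring.
  replace (s ^ i * (t ^ i * t ^ (K - i))) with ((t ^ i * s ^ i) * t ^ (K - i)) by ring.
  apply Rmult_le_compat_l; auto. apply Rmult_le_pos; auto.
Qed.

Lemma extra_id a b aa bb s t S T N :
  sm (fun i => (a i * bb - aa * b i) * (s ^ i * T - t ^ i * S)) N =
  bb * T * ps a N s - bb * S * ps a N t - aa * T * ps b N s + aa * S * ps b N t.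
Proof. unfold ps. induction N; simpl; [ring|]. rewrite IHN. ring. Qed.

Lemma ratio_mono (a b : nat -> R) K s t :
  (forall j, (j < K)%nat -> 0 < b j) ->
  (forall j, (j < K)%nat -> 0 <= a j) ->
  (forall j, (S j < K)%nat -> a (S j) * b j <= a j * b (S j)) ->
  0 <= s <= t ->
  ps a K t * ps b K s <= ps a K s * ps b K t.
Proof.
  intros Hb Ha Hc Hst.
  assert (HP := pair_cond a b K Hb Hc).
  induction K.
  - unfold ps; simpl; lra.
  - assert (IH : ps a K t * ps b K s <= ps a K s * ps b K t).
    { apply IHK; intros; [apply Hb|apply Ha|apply Hc|apply HP]; lia. }
    assert (E : 0 <= sm (fun i => (a i * b K - a K * b i) * (s ^ i * t ^ K - t ^ i * s ^ K)) K).
    { apply sm_nonneg. intros i Hi.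
      apply Rmult_le_pos.
      - assert (a K * b i <= a i * b K) by (apply HP; lia). lra.
      - assert (t ^ i * s ^ K <= s ^ i * t ^ K) by (apply pow_cross; auto; lia). lra. }
    rewrite extra_id in E.
    unfold ps in *. simpl. nra.
Qed.

Lemma C_pos n i : 0 < Binomial.C n i.
Proof.
  unfold Binomial.C. apply Rdiv_lt_0_compat. apply lt_0_INR, lt_O_fact.
  apply Rmult_lt_0_compat; apply lt_0_INR, lt_O_fact.
Qed.

Lemma fact_S_R x : INR (fact (S x)) = INR (S x) * INR (fact x).
Proof. change (fact (S x)) with (S x * fact x)%nat. apply mult_INR. Qed.

Lemma C_ratio m L : (1 <= L <= m)%nat ->
  Binomial.C m L * INR L = Binomial.C m (L - 1) * INR (m - L + 1).
Proof.
  intros H. destruct L as [|L']; [lia|].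
  remember (m - S L')%nat as r. unfold Binomial.C.
  replace m with (S L' + r)%nat by lia.
  replace (S L' + r - S L')%nat with r by lia.
  replace (S L' - 1)%nat with L' by lia.
  replace (S L' + r - L')%nat with (S r) by lia.
  replace (S L' + r - S L' + 1)%nat with (S r) by lia.
  rewrite !fact_S_R.
  assert (INR (fact L') <> 0) by apply INR_fact_neq_0.
  assert (INR (fact r) <> 0) by apply INR_fact_neq_0.
  assert (INR (S L') <> 0) by (apply not_0_INR; lia).
  assert (INR (S r) <> 0) by (apply not_0_INR; lia).
  replace (r + 1)%nat with (S r) by lia. field. auto.
Qed.

Lemma C_absorb n k : (1 <= k <= n)%nat ->
  Binomial.C n k * INR k = INR n * Binomial.C (n - 1) (k - 1).
Proof.
  intros H. destruct k as [|k']; [lia|]. destruct n as [|n']; [lia|].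
  unfold Binomial.C. replace (S n' - 1)%nat with n' by lia. replace (S k' - 1)%nat with k' by lia.
  replace (S n' - S k')%nat with (n' - k')%nat by lia.
  rewrite !fact_S_R.
  assert (INR (fact k') <> 0) by apply INR_fact_neq_0.
  assert (INR (fact (n' - k')) <> 0) by apply INR_fact_neq_0.
  assert (INR (S k') <> 0) by (apply not_0_INR; lia).
  field. auto.
Qed.

Lemma C_absorb2 n k : (k < n)%nat ->
  Binomial.C n k * INR (n - k) = INR n * Binomial.C (n - 1) k.
Proof.
  intros H. destruct n as [|n']; [lia|]. unfold Binomial.C.
  replace (S n' - 1)%nat with n' by lia.
  replace (S n' - k)%nat with (S (n' - k)) by lia.
  rewrite !fact_S_R.
  assert (INR (fact k) <> 0) by apply INR_fact_neq_0.
  assert (INR (fact (n' - k)) <> 0) by apply INR_fact_neq_0.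
  assert (INR (S (n' - k)) <> 0) by (apply not_0_INR; lia).
  field. auto.
Qed.

Definition Dform (n k : nat) (p : R) :=
  INR n * Binomial.C (n - 1) (k - 1) * p ^ (k - 1) * (1 - p) ^ (n - k).

Lemma term_deriv n k0 r p : 
  is_derive (fun p => Binomial.C n (S k0) * p ^ (S k0) * (1 - p) ^ (S r)) p
    (Binomial.C n (S k0) * (INR (S k0) * p ^ k0 * (1 - p) ^ (S r) - INR (S r) * p ^ (S k0) * (1 - p) ^ r)).
Proof.
  auto_derive; auto. change (match k0 with 0%nat => 1 | S _ => INR k0 + 1 end) with (INR (S k0)). change (match r with 0%nat => 1 | S _ => INR r + 1 end) with (INR (S r)). simpl. generalize (match k0 with 0%nat => 1 | S _ => INR k0 + 1 end) (match r with 0%nat => 1 | S _ => INR r + 1 end). intros. unfold Rminus. ring.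
Qed.

Lemma term_deriv0 n k0 p : 
  is_derive (fun p => Binomial.C n (S k0) * p ^ (S k0) * (1 - p) ^ 0) p
    (Binomial.C n (S k0) * INR (S k0) * p ^ k0).
Proof.
  auto_derive; auto. simpl.
  generalize (match k0 with 0%nat => 1 | S _ => INR k0 + 1 end). intros. unfold Rminus. ring.
Qed.

Lemma h_deriv_aux j : forall k n, (k + j = n)%nat -> (1 <= k)%nat ->
  forall p, is_derive (h_kn k n) p (Dform n k p).
Proof.
  induction j; intros k n Hkn Hk p.
  - replace k with n by lia. destruct n as [|k0]; [lia|].
    replace (Dform (S k0) (S k0) p) with (Binomial.C (S k0) (S k0) * INR (S k0) * p ^ k0).
    2:{ unfold Dform. replace (S k0 - S k0)%nat with 0%nat by lia.
    rewrite C_absorb by lia. replace (S k0 - 1)%nat with k0 by lia. simpl. ring. }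
    eapply is_derive_ext.
    2:{ apply (term_deriv0 (S k0) k0 p). }
    { intros t. unfold h_kn. rewrite sum_n_n. replace (S k0 - S k0)%nat with 0%nat by lia. reflexivity. }
  - destruct k as [|k0]; [lia|].
    assert (IH := IHj (S (S k0)) n ltac:(lia) ltac:(lia) p).
    assert (T := term_deriv n k0 (n - S (S k0)) p).
    assert (E : forall t, plus (Binomial.C n (S k0) * t ^ (S k0) * (1 - t) ^ (S (n - S (S k0)))) (h_kn (S (S k0)) n t) = h_kn (S k0) n t).
    { intros t. unfold h_kn. rewrite (sum_n_m_Chasles _ (S k0) (S k0) n) by lia.
      rewrite sum_n_n. f_equal. f_equal. f_equal. lia. }
    assert (D := is_derive_plus _ _ _ _ _ T IH).
    assert (D2 := is_derive_ext _ _ _ _ E D). 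
    replace (Dform n (S k0) p) with (plus (Binomial.C n (S k0) * (INR (S k0) * p ^ k0 * (1 - p) ^ S (n - S (S k0)) -
       INR (S (n - S (S k0))) * p ^ S k0 * (1 - p) ^ (n - S (S k0)))) (Dform n (S (S k0)) p)); auto.
    change (plus ?a ?b) with (a + b).
    unfold Dform.
    set (r := (n - S (S k0))%nat) in *.
    assert (A1 := C_absorb n (S k0) ltac:(lia)).
    assert (A2 := C_absorb2 n (S k0) ltac:(lia)).
    replace (n - S k0)%nat with (S r) in * by (unfold r; lia).
    replace (S (S k0) - 1)%nat with (S k0) by lia.
    replace (S k0 - 1)%nat with k0 in * by lia.
    rewrite <- A1, <- A2.
    change (p ^ S k0) with (p * p ^ k0).
    change ((1 - p) ^ S r) with ((1 - p) * (1 - p) ^ r).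
    match goal with |- ?a = ?b => change (@eq R a b) end. ring.
Qed.

Lemma h_deriv k n p : (1 <= k <= n)%nat -> is_derive (h_kn k n) p (Dform n k p).
Proof. intros H. apply (h_deriv_aux (n - k)); lia. Qed.

Lemma Derive_h k n p : (1 <= k <= n)%nat -> Derive (h_kn k n) p = Dform n k p.
Proof. intros H. apply is_derive_unique, h_deriv, H. Qed.

Definition tm (n : nat) (p : R) (i : nat) := Binomial.C n i * p ^ i * (1 - p) ^ (n - i).

Lemma one_minus_h k n p : (1 <= k <= n)%nat -> 1 - h_kn k n p = sm (tm n p) k.
Proof.
  intros H.
  assert (E : sum_n_m (tm n p) 0 n = 1).
  { change (sum_n (tm n p) n = 1). rewrite sum_n_Reals. unfold tm.
    rewrite <- binomial. replace (p + (1 - p)) with 1 by ring. apply pow1. }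
  rewrite (sum_n_m_Chasles _ 0 (k - 1) n) in E by lia.
  rewrite sm_sum_n_m in E. replace (S (k - 1)) with k in E by lia.
  unfold h_kn. change (sum_n_m (fun i : nat => Binomial.C n i * p ^ i * (1 - p) ^ (n - i)) k n)
    with (sum_n_m (tm n p) k n).
  change (plus ?a ?b) with (a + b) in E. lra.
Qed.

Definition Vk (n k : nat) (t : R) := ps (fun j => Binomial.C n (k - 1 - j)) k t.

Lemma S_t k n p : (1 <= k <= n)%nat -> 0 < p ->
  sm (tm n p) k = p ^ n * ((1 - p) / p) ^ (n - k + 1) * Vk n k ((1 - p) / p).
Proof.
  intros H Hp. set (t := (1 - p) / p).
  assert (Ht : 1 - p = p * t) by (unfold t; field; lra).
  rewrite (sm_ext_lt _ (fun i => p ^ n * t ^ (n - k + 1) * (Binomial.C n i * t ^ (k - 1 - i)))).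
  2:{ intros i Hi. unfold tm. rewrite Ht, Rpow_mult_distr.
      assert (P1: p^n = p^i * p^(n-i)) by (rewrite <- pow_add; f_equal; lia).
      assert (T1: t^(n-i) = t^(n-k+1) * t^(k-1-i)) by (rewrite <- pow_add; f_equal; lia).
      rewrite T1, P1. ring. }
  rewrite sm_scal. f_equal.
  unfold Vk, ps.
  rewrite <- (sm_rev (fun i => Binomial.C n i * t ^ (k - 1 - i))).
  apply sm_ext_lt. intros j Hj. f_equal. f_equal. lia.
Qed.

Lemma R_all k n x : (1 <= k <= n)%nat ->
  R_kn k n x = (1 - x) * Dform n k x / sm (tm n x) k.
Proof. intros H. unfold R_kn. rewrite Derive_h by auto. rewrite one_minus_h by auto. reflexivity. Qed.

Lemma Vk_pos n k t : (1 <= k)%nat -> 0 < t -> 0 < Vk n k t.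
Proof.
  intros Hk Ht. unfold Vk, ps. apply sm_pos; [lia|]. intros i Hi.
  apply Rmult_lt_0_compat; [apply C_pos|]. apply pow_lt; auto.
Qed.

Definition cc (n k : nat) := INR n * Binomial.C (n - 1) (k - 1).

Lemma cc_pos n k : (1 <= n)%nat -> 0 < cc n k.
Proof. intros. unfold cc. apply Rmult_lt_0_compat; [apply lt_0_INR; lia|apply C_pos]. Qed.

Lemma R_t k n p : (1 <= k <= n)%nat -> 0 < p < 1 ->
  R_kn k n p = cc n k / Vk n k ((1 - p) / p).
Proof.
  intros H Hp. rewrite R_all by auto. rewrite S_t by (auto; lra).
  set (t := (1 - p) / p).
  assert (Ht : 1 - p = p * t) by (unfold t; field; lra).
  assert (Htp : 0 < t) by (unfold t; apply Rdiv_lt_0_compat; lra).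
  assert (HV := Vk_pos n k t ltac:(lia) Htp).
  unfold Dform. fold (cc n k).
  rewrite Ht, Rpow_mult_distr.
  assert (P1: p^n = p^(k-1) * p^(n-k+1)) by (rewrite <- pow_add; f_equal; lia).
  assert (P2: p^(n-k+1) = p * p^(n-k)) by (replace (n-k+1)%nat with (S (n-k)) by lia; reflexivity).
  assert (T2: t^(n-k+1) = t * t^(n-k)) by (replace (n-k+1)%nat with (S (n-k)) by lia; reflexivity).
  rewrite P1, P2, T2.
  assert (0 < p ^ (k-1)) by (apply pow_lt; lra).
  assert (0 < p ^ (n-k)) by (apply pow_lt; lra).
  assert (0 < t ^ (n-k)) by (apply pow_lt; lra).
  field. repeat split; lra.
Qed.

Lemma cross_ratio X1 Y1 X2 Y2 L K al be : 0 < L -> 0 < K -> 0 <= X1 -> 0 <= X2 ->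
  Y1 * L = X1 * al -> Y2 * K = X2 * be -> be * L <= al * K -> X1 * Y2 <= Y1 * X2.
Proof.
  intros HL HK H1 H2 E1 E2 Hc.
  apply (Rmult_le_reg_r (L * K)); [nra|].
  replace (X1 * Y2 * (L * K)) with ((X1 * X2) * (be * L)) by
    (replace (X1*Y2*(L*K)) with (X1 * L * (Y2*K)) by ring; rewrite E2; ring).
  replace (Y1 * X2 * (L * K)) with ((X1 * X2) * (al * K)) by
    (replace (Y1*X2*(L*K)) with ((Y1 * L) * X2 * K) by ring; rewrite E1; ring).
  apply Rmult_le_compat_l; [nra|auto].
Qed.

Lemma pad (a a' : nat -> R) L K x : (L <= K)%nat ->
  (forall j, (j < L)%nat -> a j = a' j) -> (forall j, (L <= j < K)%nat -> a j = 0) ->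
  ps a K x = ps a' L x.
Proof.
  revert L. induction K; intros L HLK H1 H2.
  - replace L with 0%nat by lia. reflexivity.
  - destruct (Nat.eq_dec L (S K)) as [->|HL].
    + unfold ps. apply sm_ext_lt. intros i Hi. rewrite H1; auto.
    + unfold ps in *. simpl. rewrite (IHK L); try lia; auto.
      rewrite H2 by lia. ring.
      intros; apply H2; lia.
Qed.

Lemma div_cross A B A' B' : 0 < B -> 0 < B' -> A * B' <= A' * B -> A / B <= A' / B'.
Proof.
  intros HB HB' H. apply (Rmult_le_reg_r (B * B')); [nra|].
  replace (A / B * (B * B')) with (A * B') by (field; lra).
  replace (A' / B' * (B * B')) with (A' * B) by (field; lra). auto.
Qed.

Lemma t_mono p q : 0 < p -> p <= q -> q < 1 -> 0 < (1 - q) / q <= (1 - p) / p.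
Proof.
  intros Hp Hpq Hq. split. apply Rdiv_lt_0_compat; lra.
  replace ((1 - q) / q) with (/ q - 1) by (field; lra).
  replace ((1 - p) / p) with (/ p - 1) by (field; lra).
  assert (/ q <= / p) by (apply Rinv_le_contravar; lra). lra.
Qed.

Lemma nat_ineq n m K L : (1 <= L <= K)%nat -> (K <= n)%nat -> (L <= m)%nat -> (n - K <= m - L)%nat ->
  ((n - K + 1) * L <= (m - L + 1) * K)%nat.
Proof.
  intros. apply Nat.le_trans with ((m - L + 1) * L)%nat.
  apply Nat.mul_le_mono_r; lia. apply Nat.mul_le_mono_l; lia.
Qed.

Lemma part2 k n l m : (1 <= k)%nat -> (k <= n)%nat -> (1 <= l)%nat -> (l <= m)%nat ->
      (l <= k)%nat -> (n - k <= m - l)%nat ->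
      incr_on01 (fun p => R_kn k n p / R_kn l m p).
Proof.
  intros H1 H2 H3 H4 H5 H6 p q Hp Hpq Hq.
  rewrite !R_t by (auto; lra).
  destruct (t_mono p q Hp Hpq Hq) as [Htq Htqp].
  set (tp := (1 - p) / p) in *. set (tq := (1 - q) / q) in *.
  set (a := fun j => if (j <? l)%nat then Binomial.C m (l - 1 - j) else 0).
  set (b := fun j => Binomial.C n (k - 1 - j)).
  assert (Ha : forall j, (j < k)%nat -> 0 <= a j).
  { intros j _. unfold a. destruct (j <? l)%nat; [left; apply C_pos|lra]. }
  assert (HM : ps a k tp * ps b k tq <= ps a k tq * ps b k tp).
  { apply ratio_mono; [intros; apply C_pos|auto| |lra].
    intros j Hj. unfold a, b.
    destruct (Nat.ltb_spec (S j) l).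
    - destruct (Nat.ltb_spec j l); [|lia].
      set (L := (l - 1 - j)%nat). set (K := (k - 1 - j)%nat).
      replace (l - 1 - S j)%nat with (L - 1)%nat by (unfold L; lia).
      replace (k - 1 - S j)%nat with (K - 1)%nat by (unfold K; lia).
      apply (cross_ratio _ _ _ _ (INR L) (INR K) (INR (m - L + 1)) (INR (n - K + 1))).
      + apply lt_0_INR; unfold L; lia.
      + apply lt_0_INR; unfold K; lia.
      + left; apply C_pos.
      + left; apply C_pos.
      + apply C_ratio; unfold L; lia.
      + apply C_ratio; unfold K; lia.
      + rewrite <- !mult_INR. apply le_INR. apply nat_ineq; unfold L, K; lia.
    - rewrite Rmult_0_l. apply Rmult_le_pos. apply (Ha j); lia. left; apply C_pos. }
  assert (Pa : forall x, ps a k x = Vk m l x).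
  { intros x. unfold Vk. apply pad; auto.
    - intros j Hj. unfold a. destruct (Nat.ltb_spec j l); [auto|lia].
    - intros j Hj. unfold a. destruct (Nat.ltb_spec j l); [lia|auto]. }
  rewrite !Pa in HM. fold (Vk n k tp) (Vk n k tq) in HM.
  assert (V1 := Vk_pos n k tp ltac:(lia) ltac:(lra)).
  assert (V2 := Vk_pos n k tq ltac:(lia) ltac:(lra)).
  assert (V3 := Vk_pos m l tp ltac:(lia) ltac:(lra)).
  assert (V4 := Vk_pos m l tq ltac:(lia) ltac:(lra)).
  assert (C1 := cc_pos n k ltac:(lia)). assert (C2 := cc_pos m l ltac:(lia)).
  replace (cc n k / Vk n k tp / (cc m l / Vk m l tp)) with (cc n k / cc m l * (Vk m l tp / Vk n k tp)) by (field; lra).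
  replace (cc n k / Vk n k tq / (cc m l / Vk m l tq)) with (cc n k / cc m l * (Vk m l tq / Vk n k tq)) by (field; lra).
  apply Rmult_le_compat_l. left; apply Rdiv_lt_0_compat; auto.
  apply div_cross; auto.
Qed.

Lemma mono_deriv c a b p : is_derive (fun x => c * x ^ a * (1 - x) ^ b) p
  (c * (INR a * p ^ (pred a) * (1 - p) ^ b - INR b * p ^ a * (1 - p) ^ (pred b))).
Proof.
  auto_derive; auto. match goal with |- ?x = ?y => change (@eq R x y) end. unfold Rminus. ring.
Qed.

Lemma minus_R (x y : R) : minus x y = x - y.
Proof. reflexivity. Qed.

Lemma Sm_deriv k n p : (1 <= k <= n)%nat ->
  is_derive (fun x => sm (tm n x) k) p (- Dform n k p).
Proof.
  intros H.
  assert (Hd := is_derive_minus (fun _ : R => 1) (h_kn k n) p zero (Dform n k p) (is_derive_const _ _) (h_deriv k n p H)).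
  match type of Hd with is_derive _ _ ?v => set (vv := v) in Hd end.
  assert (Ev : vv = - Dform n k p) by (unfold vv; rewrite minus_R; unfold zero; simpl; ring).
  rewrite Ev in Hd.
  eapply is_derive_ext; [|exact Hd].
  intros t. simpl. rewrite minus_R. apply one_minus_h; auto.
Qed.

Lemma R_all2 k n x : (1 <= k <= n)%nat ->
  R_kn k n x = cc n k * x ^ (k - 1) * (1 - x) ^ (S (n - k)) / sm (tm n x) k.
Proof. intros H. rewrite R_all by auto. unfold Dform, cc. simpl. f_equal. ring. Qed.

Lemma dN_p c a b p : p * (c * (INR a * p ^ (pred a) * (1 - p) ^ (S b) - INR (S b) * p ^ a * (1 - p) ^ (pred (S b))))
  = c * p ^ a * (1 - p) ^ b * (INR a * (1 - p) - INR (S b) * p).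
Proof.
  destruct a; cbn [Nat.pred pow]; [rewrite INR_0; ring|]. ring.
Qed.

Definition uu (n k : nat) (j : nat) := if (j <? k - 1)%nat then Binomial.C n (k - 2 - j) else 0.

Lemma V_split n k t : (1 <= k)%nat -> Vk n k t = Binomial.C n (k - 1) + t * ps (uu n k) k t.
Proof.
  intros Hk. destruct k as [|k']; [lia|]. unfold Vk, ps. rewrite sm_shift. simpl sm at 2.
  unfold uu at 2. replace (k' <? S k' - 1)%nat with false by (symmetry; apply Nat.ltb_ge; lia).
  replace (S k' - 1 - 0)%nat with (S k' - 1)%nat by lia.
  rewrite Rmult_0_l, Rplus_0_r, pow_O, Rmult_1_r. f_equal.
  rewrite <- sm_scal. apply sm_ext_lt. intros i Hi. unfold uu.
  replace (i <? S k' - 1)%nat with true by (symmetry; apply Nat.ltb_lt; lia).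
  replace (S k' - 1 - S i)%nat with (S k' - 2 - i)%nat by lia. simpl. ring.
Qed.

Lemma cc_eq n k : (1 <= k <= n)%nat -> cc n k = INR (S (n - k)) * Binomial.C n (k - 1).
Proof.
  intros H. unfold cc. rewrite <- C_absorb by auto. rewrite C_ratio by auto.
  replace (n - k + 1)%nat with (S (n - k)) by lia. ring.
Qed.

Lemma f_formula k n p : (1 <= k <= n)%nat -> 0 < p < 1 ->
  p * Derive (R_kn k n) p / R_kn k n p =
  INR (k - 1) - INR (S (n - k)) * (ps (uu n k) k ((1 - p) / p) / Vk n k ((1 - p) / p)).
Proof.
  intros H Hp.
  set (a := (k - 1)%nat). set (b := (n - k)%nat). set (c := cc n k).
  set (S0 := sm (tm n p) k).
  set (N := c * p ^ a * (1 - p) ^ S b).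
  set (dN := c * (INR a * p ^ (pred a) * (1 - p) ^ (S b) - INR (S b) * p ^ a * (1 - p) ^ (pred (S b)))).
  set (D := Dform n k p).
  assert (HSpos : S0 = p ^ n * ((1 - p) / p) ^ (n - k + 1) * Vk n k ((1 - p) / p)) by (apply S_t; auto; lra).
  set (t := (1 - p) / p) in *.
  assert (Ht : 1 - p = p * t) by (unfold t; field; lra).
  assert (Htp : 0 < t) by (unfold t; apply Rdiv_lt_0_compat; lra).
  assert (HV := Vk_pos n k t ltac:(lia) Htp).
  assert (Hc : 0 < c) by (apply cc_pos; lia).
  assert (HS0 : 0 < S0).
  { rewrite HSpos. apply Rmult_lt_0_compat; auto. apply Rmult_lt_0_compat; apply pow_lt; lra. }
  assert (HX : 0 < p ^ a) by (apply pow_lt; lra).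
  assert (HY : 0 < (1 - p) ^ b) by (apply pow_lt; lra).
  assert (HDer : Derive (R_kn k n) p = (dN * S0 - N * (- D)) / S0 ^ 2).
  { rewrite (Derive_ext _ (fun x => cc n k * x ^ (k - 1) * (1 - x) ^ (S (n - k)) / sm (tm n x) k)).
    2:{ intros; apply R_all2; auto. }
    apply is_derive_unique. apply is_derive_div.
    - apply mono_deriv.
    - apply Sm_deriv; auto.
    - fold S0. lra. }
  rewrite HDer, R_all2 by auto. fold a b c S0 N.
  assert (HZ : 0 < (1 - p) ^ S b) by (apply pow_lt; lra).
  assert (HN : 0 < N) by (unfold N; apply Rmult_lt_0_compat; [apply Rmult_lt_0_compat|]; auto).
  replace (p * ((dN * S0 - N * - D) / S0 ^ 2) / (N / S0)) with (((p * dN) * S0 + p * N * D) / (S0 * N)).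
  2:{ field. repeat split; lra. }
  unfold dN. rewrite dN_p. unfold N.
  replace (((c * p ^ a * (1 - p) ^ b * (INR a * (1 - p) - INR (S b) * p)) * S0 + p * (c * p ^ a * (1 - p) ^ S b) * D) / (S0 * (c * p ^ a * (1 - p) ^ S b)))
    with ((INR a * (1 - p) - INR (S b) * p) / (1 - p) + p * D / S0).
  2:{ simpl. field. repeat split; lra. }
  assert (HpD : p * D / S0 = c / (t * Vk n k t)).
  { rewrite HSpos. unfold D, Dform. fold (cc n k) c. fold a b.
    rewrite Ht, Rpow_mult_distr.
    assert (P1: p^n = p^a * p^(S b)) by (rewrite <- pow_add; f_equal; unfold a, b; lia).
    replace (b + 1)%nat with (S b) by lia.
    rewrite P1. simpl.
    assert (0 < t ^ b) by (apply pow_lt; lra).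
    assert (0 < p ^ b) by (apply pow_lt; lra).
    field. repeat split; lra. }
  rewrite HpD.
  assert (HVs := V_split n k t ltac:(lia)).
  assert (Hce : c = INR (S b) * Binomial.C n (k - 1)) by (apply cc_eq; auto).
  rewrite Hce. rewrite HVs in *. rewrite Ht.
  field. repeat split; try lra.
Qed.

Lemma part3 k n : (1 <= k)%nat -> (k <= n)%nat ->
      decr_on01 (fun p => p * Derive (R_kn k n) p / R_kn k n p).
Proof.
  intros H1 H2 p q Hp Hpq Hq.
  rewrite !f_formula by (auto; lra).
  destruct (t_mono p q Hp Hpq Hq) as [Htq Htqp].
  set (tp := (1 - p) / p) in *. set (tq := (1 - q) / q) in *.
  assert (Hu : forall j, 0 <= uu n k j).
  { intros j. unfold uu. destruct (j <? k - 1)%nat; [left; apply C_pos|lra]. }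
  assert (HM : ps (uu n k) k tp * Vk n k tq <= ps (uu n k) k tq * Vk n k tp).
  { unfold Vk. apply ratio_mono; [intros; apply C_pos|intros; auto| |lra].
    intros j Hj. unfold uu.
    destruct (Nat.ltb_spec (S j) (k - 1)).
    - destruct (Nat.ltb_spec j (k - 1)); [|lia].
      set (v := (k - 2 - j)%nat).
      replace (k - 2 - S j)%nat with (v - 1)%nat by (unfold v; lia).
      replace (k - 1 - j)%nat with (S v) by (unfold v; lia).
      replace (k - 1 - S j)%nat with v by (unfold v; lia).
      apply (cross_ratio _ _ _ _ (INR v) (INR (S v)) (INR (n - v + 1)) (INR (n - S v + 1))).
      + apply lt_0_INR; unfold v; lia.
      + apply lt_0_INR; lia.
      + left; apply C_pos.
      + left; apply C_pos.
      + apply C_ratio; unfold v; lia.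
      + rewrite C_ratio by (unfold v; lia). replace (S v - 1)%nat with v by lia. auto.
      + rewrite <- !mult_INR. apply le_INR. apply Nat.mul_le_mono; lia.
    - rewrite Rmult_0_l. apply Rmult_le_pos. apply Hu. left; apply C_pos. }
  assert (V1 := Vk_pos n k tp ltac:(lia) ltac:(lra)).
  assert (V2 := Vk_pos n k tq ltac:(lia) ltac:(lra)).
  assert (D := div_cross _ _ _ _ V1 V2 HM).
  assert (0 <= INR (S (n - k))) by apply pos_INR.
  assert (INR (S (n - k)) * (ps (uu n k) k tp / Vk n k tp) <= INR (S (n - k)) * (ps (uu n k) k tq / Vk n k tq))
    by (apply Rmult_le_compat_l; auto).
  lra.
Qed.

Theorem lemma2p4 :
  (forall k n l m : nat,
      (1 <= k)%nat -> (k <= n)%nat -> (1 <= l)%nat -> (l <= m)%nat ->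
      (l <= k)%nat -> (n - k <= m - l)%nat ->
      incr_on01 (fun p => R_kn k n p / R_kn l m p))
  /\
  (forall k n : nat, (1 <= k)%nat -> (k <= n)%nat ->
      decr_on01 (fun p => p * Derive (R_kn k n) p / R_kn k n p)).
Proof. split; [apply part2|apply part3]. Qed.
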